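(* There is an absolute constant $C>0$ such that for all integers $d,h\ge 1$ the following holds: the class of graphs admitting a signed tree model of width at most $d$ whose tree has depth at most $h$ admits an adjacency labeling scheme in which every $n$-vertex graph ($n\ge 2$) receives labels of at most $C\,d\,h\log n$ bits; i.e., every $n$-vertex graph with a signed tree model of width $d$ and depth $h$ admits $O(dh\log n)$-bit adjacency labels decodable by a common decoder.
   Context: Tree notation: for a rooted tree $T$, $u\prec_T u'$ means $u$ is a strict ancestor of $u'$, $u\preceq_T u'$ means $u=u'$ or $u\prec_T u'$; for unordered pairs, $uv\preceq_T u'v'$ means ($u\preceq_T u'$ and $v\preceq_T v'$) or ($v\preceq_T u'$ and $u\preceq_T v'$), and $uv\prec_T u'v'$ means $uv\preceq_T u'v'$ and $\{u,v\}\ne\{u',v'\}$. A full rooted binary tree has every non-leaf node with exactly two children; its depth is the maximum number of nodes on a root-to-leaf path. A transversal pair of $T$ is a pair of distinct nodes neither an ancestor of the other; two transversal pairs cross if their endpoints can be named $\{a,b\},\{a',b'\}$ with $a\prec_T a'$ and $b'\prec_T b$. A signed tree model is $(T,A(T),B(T))$ with $T$ a full rooted binary tree and $A(T),B(T)$ disjoint sets of transversal pairs, no two pairs of $A(T)\cup B(T)$ crossing. It defines the graph on the leaf set $L(T)$ where distinct leaves $u,v$ are adjacent iff some $u'v'\in B(T)$ has $u'v'\preceq_T uv$ and no $u''v''\in A(T)$ has $u'v'\prec_T u''v''\preceq_T uv$. Its width is the degeneracy of the graph $(V(T),A(T)\cup B(T))$. An adjacency labeling scheme with $f(n)$-bit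 labels for a class $\mathcal C$: a decoder $D$ on pairs of binary strings such that every $n$-vertex $G\in\mathcal C$ has a labeling $\ell$ of its vertices with strings of length $\le f(n)$ satisfying $D(\ell(u),\ell(v))=1$ iff $uv\in E(G)$ for distinct $u,v$. *)

(* Defs.v *)
From Stdlib Require Import Reals.
From mathcomp Require Import all_boot.

Set Implicit Arguments.
Unset Strict Implicit.
Unset Printing Implicit Defensive.

(* A node is identified by its position: the
   sequence of directions (false = left, true = right) from the root.
   The root is [::]; u is an ancestor of v iff u is a prefix of v. *)
Inductive btree : Type := BLeaf | BNode of btree & btree.

Definition node := seq bool.

Fixpoint nodes (t : btree) : seq node :=
  [::] :: match t with
          | BLeaf => [::]
          | BNode l r => map (cons false) (nodes l) ++ map (cons true) (nodes r)
          end.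

Fixpoint leaves (t : btree) : seq node :=
  match t with
  | BLeaf => [:: [::]]
  | BNode l r => map (cons false) (leaves l) ++ map (cons true) (leaves r)
  end.

Fixpoint depth (t : btree) : nat :=
  match t with
  | BLeaf => 1
  | BNode l r => (maxn (depth l) (depth r)).+1
  end.

Definition anc_le (u v : node) : bool := prefix u v.
Definition anc_lt (u v : node) : bool := prefix u v && (u != v).

(* unordered pairs are represented by ordered pairs; all notions below are
   invariant under swapping the components *)
Definition upair_eq (p q : node * node) : bool :=
  ((p.1 == q.1) && (p.2 == q.2)) || ((p.1 == q.2) && (p.2 == q.1)).

Definition pair_le (p q : node * node) : bool :=
  (anc_le p.1 q.1 && anc_le p.2 q.2) || (anc_le p.2 q.1 && anc_le p.1 q.2).

Definition pair_lt (p q : node * node) : bool :=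
  pair_le p q && ~~ upair_eq p q.

Definition transversal (t : btree) (p : node * node) : bool :=
  [&& p.1 \in nodes t, p.2 \in nodes t, p.1 != p.2,
      ~~ anc_le p.1 p.2 & ~~ anc_le p.2 p.1].

Definition cross (p q : node * node) : bool :=
  has (fun ab : node * node =>
         has (fun ab' : node * node => anc_lt ab.1 ab'.1 && anc_lt ab'.2 ab.2)
             [:: q; (q.2, q.1)])
      [:: p; (p.2, p.1)].

Definition signed_tree_model (t : btree) (A B : seq (node * node)) : Prop :=
  [/\ all (transversal t) A, all (transversal t) B,
      (forall p q, p \in A -> q \in B -> ~~ upair_eq p q) &
      (forall p q, p \in A ++ B -> q \in A ++ B -> ~~ cross p q)].

Definition model_adj (A B : seq (node * node)) (u v : node) : bool :=
  has (fun p' => pair_le p' (u, v) &&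
         ~~ has (fun p'' => pair_lt p' p'' && pair_le p'' (u, v)) A) B.

Definition ab_edge (A B : seq (node * node)) (u v : node) : bool :=
  (u != v) && has (fun p => upair_eq p (u, v)) (A ++ B).

(* the graph (V(T), A(T) u B(T)) is k-degenerate: every nonempty set of
   nodes contains a node with at most k neighbours in it.
   Its degeneracy (the width of the model) is at most k iff this holds. *)
Definition width_le (t : btree) (A B : seq (node * node)) (k : nat) : Prop :=
  forall S : seq node, all (fun x => x \in nodes t) S -> S != [::] ->
    exists2 v, v \in S & count (ab_edge A B v) (undup S) <= k.

Definition has_stm (V : finType) (adj : rel V) (d h : nat) : Prop :=
  exists (t : btree) (A B : seq (node * node)) (f : V -> node),
    [/\ signed_tree_model t A B /\ width_le t A B d, depth t <= h,
        injective f /\ (forall x, f x \in leaves t),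
        (forall u, u \in leaves t -> exists x, f x = u) &
        (forall x y, x != y -> adj x y = model_adj A B (f x) (f y))].

(* Main.v *)
Require Import Defs.
From Stdlib Require Import Reals.
From mathcomp Require Import all_boot.
From mathcomp Require Import zify.
From Stdlib Require Import Lra.

Lemma upair_refl p : upair_eq p p.
Proof. by rewrite /upair_eq !eqxx. Qed.

Lemma upair_eqP p q : upair_eq p q -> q = p \/ q = (p.2, p.1).
Proof.
case: p q => [a b] [c d]; rewrite /upair_eq /=.
by case/orP=> /andP[/eqP-> /eqP->]; [left|right].
Qed.

Lemma upair_sym p q : upair_eq p q = upair_eq q p.
Proof.
case: p q => [a b] [c d]; rewrite /upair_eq /=.
by rewrite (eq_sym a) (eq_sym b) (eq_sym a d) (eq_sym b c) (andbC (d == a)).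
Qed.

Lemma upair_swapr p a b : upair_eq p (b, a) = upair_eq p (a, b).
Proof. case: p => c d; rewrite /upair_eq /=; by rewrite orbC. Qed.

Lemma upair_swapl p a b : upair_eq (b, a) p = upair_eq (a, b) p.
Proof. by rewrite upair_sym upair_swapr upair_sym. Qed.

Lemma pair_le_swapl a b r : pair_le (b, a) r = pair_le (a, b) r.
Proof. by rewrite /pair_le /= orbC. Qed.
Lemma pair_le_swapr a b r : pair_le r (b, a) = pair_le r (a, b).
Proof. by rewrite /pair_le /= orbC andbC (andbC (anc_le r.1 b)). Qed.

Lemma pair_le_inv p q r : upair_eq p q -> pair_le p r = pair_le q r /\ pair_le r p = pair_le r q.
Proof.
move/upair_eqP=> [->|->]; first by split.
by case: p => a b /=; rewrite pair_le_swapl pair_le_swapr.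
Qed.

Lemma pair_lt_inv p q r : upair_eq p q -> pair_lt p r = pair_lt q r /\ pair_lt r p = pair_lt r q.
Proof.
move/upair_eqP=> [->|->]; first by split.
case: p => a b /=; rewrite /pair_lt pair_le_swapl pair_le_swapr.
by rewrite upair_swapl upair_swapr.
Qed.

Lemma has_inv (P : pred (node * node)) X Y :
  (forall p q, upair_eq p q -> P p = P q) ->
  (forall p, P p -> has (upair_eq p) X = has (upair_eq p) Y) ->
  has P X = has P Y.
Proof.
move=> Pinv H.
have aux: forall X Y, (forall p, P p -> has (upair_eq p) X -> has (upair_eq p) Y) ->
   has P X -> has P Y.
  move=> X' Y' H' /hasP[x xX Px].
  have: has (upair_eq x) X' by apply/hasP; exists x => //; apply: upair_refl.
  move/(H' x Px)/hasP=> [y yY exy]; apply/hasP; exists y => //.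
  by rewrite -(Pinv _ _ exy).
apply/idP/idP; apply: aux => p Pp; by rewrite H.
Qed.

Lemma model_adj_ext A B A' B' u v :
  (forall p, pair_le p (u, v) -> has (upair_eq p) A = has (upair_eq p) A') ->
  (forall p, pair_le p (u, v) -> has (upair_eq p) B = has (upair_eq p) B') ->
  model_adj A B u v = model_adj A' B' u v.
Proof.
move=> HA HB; rewrite /model_adj.
set phi := fun X p' => pair_le p' (u, v) &&
  ~~ has (fun p'' => pair_lt p' p'' && pair_le p'' (u, v)) X.
change (has (phi A) B = has (phi A') B').
have -> : has (phi A) B = has (phi A') B.
  apply: eq_has => p'; rewrite /phi; case le: (pair_le p' (u, v)) => //=.
  congr negb; apply: has_inv.
    by move=> p q e; case: (pair_lt_inv _ _ p' e) => _ ->; case: (pair_le_inv _ _ (u, v) e) => ->.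
  by move=> p /andP[_ le']; apply: HA.
apply: has_inv.
  move=> p q e; rewrite /phi; case: (pair_le_inv _ _ (u, v) e) => -> _.
  by congr (_ && ~~ _); apply: eq_has => r; case: (pair_lt_inv _ _ r e) => ->.
by move=> p /andP[le _]; apply: HB.
Qed.

Lemma leaves_uniq t : uniq (leaves t).
Proof.
elim: t => [|l IHl r IHr] //=.
rewrite cat_uniq !map_inj_uniq // ?IHl ?IHr ?andbT /=; try by move=> x y [].
apply/hasP => -[x /mapP[y _ ->] /mapP[z _]] //.
Qed.

Lemma size_nodes_lt t : size (nodes t) < (size (leaves t)).*2.
Proof.
elim: t => [|l IHl r IHr] //=.
rewrite !size_cat !size_map; move: IHl IHr; rewrite -!mul2n; unfold node in *; lia.
Qed.

Lemma size_leaf t u : u \in leaves t -> size u < depth t.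
Proof.
elim: t u => [|l IHl r IHr] u /=; first by rewrite inE => /eqP->.
rewrite mem_cat => /orP[] /mapP[w wi ->] /=.
  by rewrite ltnS; exact: leq_trans (IHl w wi) (leq_maxl _ _).
by rewrite ltnS; exact: leq_trans (IHr w wi) (leq_maxr _ _).
Qed.

Lemma ab_edge_sym A B a b : ab_edge A B a b = ab_edge A B b a.
Proof.
rewrite /ab_edge eq_sym; congr (_ && _); apply: eq_has => p.
by rewrite upair_swapr.
Qed.

Lemma orient t A B d : width_le t A B d ->
  forall S : seq node, uniq S -> all (fun x => x \in nodes t) S ->
  exists out : node -> seq node,
    [/\ (forall a, size (out a) <= d), (forall a, {subset out a <= S}) &
        (forall a b, a \in S -> b \in S -> ab_edge A B a b -> b \in out a \/ a \in out b)].
Proof.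
move=> Wd S; have [n] := ubnP (size S); elim: n S => // n IH S /ltnSE sz uS aS.
case: (altP (S =P [::])) => [->|Sn0].
  by exists (fun _ => [::]); split.
have [v vS cv] := Wd S aS Sn0.
rewrite undup_id // in cv.
have [out' [o1 o2 o3]] : exists out : node -> seq node,
    [/\ (forall a, size (out a) <= d), (forall a, {subset out a <= rem v S}) &
        (forall a b, a \in rem v S -> b \in rem v S -> ab_edge A B a b -> b \in out a \/ a \in out b)].
  apply: IH.
  - rewrite size_rem //; move: Sn0 sz; rewrite -size_eq0.
    by case: (size S) => // k _ h.
  - exact: rem_uniq.
  - by apply/allP => x /mem_rem xS; apply: (allP aS).
exists (fun a => if a == v then filter (ab_edge A B v) S else out' a); split.
- by move=> a; case: eqP => _; rewrite ?size_filter.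
- move=> a x; case: eqP => _; first by rewrite mem_filter => /andP[].
  by move/o2/mem_rem.
- move=> a b aS' bS e.
  case: (altP (a =P v)) => [av|anv].
    by left; rewrite mem_filter -av e.
  case: (altP (b =P v)) => [bv|bnv].
    by right; rewrite mem_filter -bv ab_edge_sym e aS'.
  apply: o3 => //.
    by rewrite (mem_rem_uniq _ uS) inE anv aS'.
  by rewrite (mem_rem_uniq _ uS) inE bnv bS.
Qed.

Fixpoint encw (w : seq bool) : seq bool :=
  if w is b :: w' then true :: b :: encw w' else [:: false; false].

Definition code (ws : seq (seq bool)) : seq bool := flatten (map encw ws).

Fixpoint dec_aux (s cur : seq bool) : seq (seq bool) :=
  match s with
  | true :: b :: s' => dec_aux s' (rcons cur b)
  | false :: false :: s' => cur :: dec_aux s' [::]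
  | _ => [::]
  end.

Definition dec s := dec_aux s [::].

Lemma dec_aux_encw w rest cur :
  dec_aux (encw w ++ rest) cur = (cur ++ w) :: dec_aux rest [::].
Proof.
elim: w cur => [|b w IH] cur /=; first by rewrite cats0.
by rewrite IH cat_rcons.
Qed.

Lemma dec_code ws : dec (code ws) = ws.
Proof.
elim: ws => [|w ws IH] //=.
by rewrite /dec /code /= dec_aux_encw -/(code ws) -/(dec (code ws)) IH.
Qed.

Lemma size_encw w : size (encw w) = (size w).*2.+2.
Proof. by elim: w => //= b w ->; rewrite doubleS. Qed.

Lemma size_code ws : size (code ws) = (sumn (map size ws)).*2 + (size ws).*2.
Proof.
elim: ws => [|w ws IH] //=; rewrite /code /= size_cat -/(code ws) IH size_encw.
rewrite doubleD doubleS; lia.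
Qed.

Lemma sumn_le (T : eqType) (f : T -> nat) (s : seq T) k :
  (forall x, x \in s -> f x <= k) -> sumn (map f s) <= size s * k.
Proof.
elim: s => [|x s IH] //= H.
have h1 := H x (mem_head x s).
have h2 : sumn (map f s) <= size s * k by apply: IH => y ys; apply: H; rewrite inE ys orbT.
rewrite mulSn; lia.
Qed.

Definition enc (W m : nat) : seq bool := mkseq (fun i => odd (m %/ 2 ^ i)) W.

Lemma size_enc W m : size (enc W m) = W.
Proof. by rewrite size_mkseq. Qed.

Lemma encS W m : enc W.+1 m = odd m :: enc W m./2.
Proof.
rewrite /enc /mkseq /= expn0 divn1; congr (_ :: _).
rewrite -(addn0 1) iotaDl -map_comp; apply: eq_map => i /=.
by rewrite add1n expnS divnMA divn2.
Qed.

Lemma enc_inj W m m' : m < 2 ^ W -> m' < 2 ^ W -> enc W m = enc W m' -> m = m'.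
Proof.
elim: W m m' => [|W IH] m m'; first by rewrite expn0; lia.
rewrite !encS expnS mul2n => hm hm' [ho he].
have := IH m./2 m'./2; rewrite !ltn_half_double => /(_ hm hm' he) eh.
by rewrite -(odd_double_half m) -(odd_double_half m') ho eh.
Qed.

Lemma upair_trans p q r : upair_eq p q -> upair_eq q r -> upair_eq p r.
Proof.
move/upair_eqP=> [->|->] //; case: p => a b /=.
by rewrite upair_swapl.
Qed.

Definition cands (u : node) (outs : seq (seq (seq bool))) (v : node)
    (ids : seq (seq bool)) : seq ((node * node) * (bool * bool)) :=
  flatten [seq [seq ((take i u, take (index (drop 2 e) ids) v),
                     (nth false e 0, nth false e 1))
               | e <- nth [::] outs i & index (drop 2 e) ids < size ids]
          | i <- iota 0 (size outs)].

Definition parse (l : seq bool) :=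
  let ws := dec l in (head [::] ws, dec (nth [::] ws 1), map dec (drop 2 ws)).

Definition Dec (l1 l2 : seq bool) : bool :=
  let: (u, ids1, outs1) := parse l1 in
  let: (v, ids2, outs2) := parse l2 in
  let C := cands u outs1 v ids2 ++ cands v outs2 u ids1 in
  model_adj [seq c.1 | c <- C & c.2.1] [seq c.1 | c <- C & c.2.2] u v.

Definition F (X : seq (node * node)) (q : node * node) :=
  has (fun p => upair_eq p q) X.

Section Labels.
Variables (t : btree) (A B : seq (node * node)) (out : node -> seq node) (W : nat).
Hypothesis HW : size (nodes t) < 2 ^ W.
Hypothesis Hout : forall a, {subset out a <= nodes t}.

Definition ID (a : node) := enc W (index a (nodes t)).
Definition entry (a b : node) := F A (a, b) :: F B (a, b) :: ID b.
Definition idsL (u : node) := [seq ID (take i u) | i <- iota 0 (size u).+1].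
Definition outsL (u : node) :=
  [seq [seq entry (take i u) b | b <- out (take i u)] | i <- iota 0 (size u).+1].
Definition lab (u : node) := code (u :: code (idsL u) :: map code (outsL u)).

Lemma parse_lab u : parse (lab u) = (u, idsL u, outsL u).
Proof.
have D2 : forall (x y : seq bool) s, drop 2 (x :: y :: s) = s by move=> *; rewrite /= drop0.
rewrite /parse /lab dec_code D2 [nth _ _ 1]/= dec_code [head _ _]/=; congr (_, _, _).
by rewrite -map_comp (eq_map dec_code) map_id.
Qed.

Lemma ID_inj b c : b \in nodes t -> ID c = ID b -> c = b.
Proof.
move=> bn /enc_inj.
have hb : index b (nodes t) < 2 ^ W by rewrite (leq_trans _ HW) // ltnS index_size.
have hc : index c (nodes t) < 2 ^ W by rewrite (leq_trans _ HW) // ltnS index_size.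
move=> /(_ hc hb) e.
have cn : c \in nodes t by rewrite -index_mem e index_mem.
by rewrite -(nth_index [::] cn) e nth_index.
Qed.

Lemma take_prefix (a u : node) : prefix a u -> take (size a) u = a.
Proof. by rewrite prefixE => /eqP. Qed.

Lemma cands_complete u v a b :
  prefix a u -> prefix b v -> b \in out a ->
  ((a, b), (F A (a, b), F B (a, b))) \in cands u (outsL u) v (idsL v).
Proof.
move=> au bv bo.
have sa := size_prefix au; have sb := size_prefix bv.
have ta := take_prefix _ _ au; have tb := take_prefix _ _ bv.
have bn : b \in nodes t by move: bo; apply: Hout.
apply/flattenP.
exists [seq ((take (size a) u, take (index (drop 2 e) (idsL v)) v),
                     (nth false e 0, nth false e 1))
               | e <- nth [::] (outsL u) (size a) & index (drop 2 e) (idsL v) < size (idsL v)].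
  apply/mapP; exists (size a) => //; rewrite mem_iota /= /outsL size_map size_iota; by rewrite ltnS.
have Hix : index (ID b) (idsL v) < size (idsL v).
  rewrite index_mem; apply/mapP; exists (size b); last by rewrite tb.
  by rewrite mem_iota /= ltnS.
have Htk : take (index (ID b) (idsL v)) v = b.
  apply: ID_inj => //.
  have m : ID b \in idsL v by rewrite -index_mem.
  have hs : index (ID b) (idsL v) < (size v).+1 by move: Hix; rewrite /idsL size_map size_iota.
  have := nth_index [::] m.
  by rewrite /idsL (nth_map 0) ?size_iota // nth_iota // add0n.
apply/mapP; exists (entry a b).
  rewrite mem_filter /entry [drop 2 _]/= drop0 Hix andTb.
  rewrite /outsL (nth_map 0); last by rewrite size_iota ltnS.
  by rewrite nth_iota ?ltnS // add0n ta; apply: map_f.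
by rewrite /entry [drop 2 _]/= drop0 Htk ta.
Qed.

Lemma cands_sound u v c :
  c \in cands u (outsL u) v (idsL v) -> c.2 = (F A c.1, F B c.1).
Proof.
move/flattenP=> [s /mapP[i ii ->]] /mapP[e].
rewrite mem_filter => /andP[Hix ei] ->.
move: ii; rewrite mem_iota /= /outsL size_map size_iota => ii.
move: ei; rewrite (nth_map 0) ?size_iota // nth_iota // add0n.
move/mapP=> [b bo ee]; subst e.
have bn : b \in nodes t by move: bo; apply: Hout.
move: Hix; rewrite /entry [drop 2 _]/= drop0 => Hix.
have Htk : take (index (ID b) (idsL v)) v = b.
  apply: ID_inj => //.
  have m : ID b \in idsL v by rewrite -index_mem.
  have hs : index (ID b) (idsL v) < (size v).+1 by move: Hix; rewrite /idsL size_map size_iota.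
  have := nth_index [::] m.
  by rewrite /idsL (nth_map 0) ?size_iota // nth_iota // add0n.
by move: Htk; rewrite /= => ->.
Qed.

End Labels.

Section Correct.
Variables (t : btree) (A B : seq (node * node)) (out : node -> seq node) (W : nat).
Hypothesis HW : size (nodes t) < 2 ^ W.
Hypothesis Hout : forall a, {subset out a <= nodes t}.
Hypothesis Hor : forall a b, a \in nodes t -> b \in nodes t -> ab_edge A B a b ->
  b \in out a \/ a \in out b.

Let C u v := cands u (outsL t A B out W u) v (idsL t W v) ++
             cands v (outsL t A B out W v) u (idsL t W u).

Lemma key (sel : bool * bool -> bool) X u v p :
  (forall q, sel (F A q, F B q) = F X q) -> all (Defs.transversal t) X ->
  {subset X <= A ++ B} -> pair_le p (u, v) ->
  has (upair_eq p) X = has (upair_eq p) [seq c.1 | c <- C u v & sel c.2].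
Proof.
move=> Hsel HX HXs ple; apply/idP/idP.
  case/hasP=> p0 p0X e0.
  have tr := allP HX p0 p0X.
  have ple0 : pair_le p0 (u, v) by case: (pair_le_inv _ _ (u, v) e0) => <- _.
  have [a [b [au bv e1]]] : exists a b, [/\ prefix a u, prefix b v & upair_eq p0 (a, b)].
    move: ple0 tr; case: p0 {p0X e0} => x y; rewrite /pair_le /anc_le /= => /orP[] /andP[h1 h2] _.
      by exists x, y; rewrite upair_refl.
    by exists y, x; rewrite upair_swapr upair_refl.
  have Fab : F X (a, b) by apply/hasP; exists p0.
  have [an bn abn] : [/\ a \in nodes t, b \in nodes t & a != b].
    move: tr e1; case: p0 {p0X e0 ple0 Fab} => x y; rewrite /Defs.transversal /upair_eq /= => /and5P[hx hy hxy _ _].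
    by case/orP=> /andP[/eqP<- /eqP<-]; rewrite ?hx ?hy // eq_sym.
  have edge : ab_edge A B a b.
    by rewrite /ab_edge abn /=; apply/hasP; exists p0 => //; apply: HXs.
  have ep : upair_eq p (a, b) := upair_trans _ _ _ e0 e1.
  apply/hasP; case: (Hor _ _ an bn edge) => [bo|ao].
    exists (a, b) => //; apply/mapP; exists ((a, b), (F A (a, b), F B (a, b))) => //.
    rewrite mem_filter /= Hsel Fab /= mem_cat.
    by rewrite (@cands_complete t A B out W HW Hout _ _ _ _ au bv bo).
  exists (b, a); last by rewrite upair_swapr.
  apply/mapP; exists ((b, a), (F A (b, a), F B (b, a))) => //.
  rewrite mem_filter /= Hsel /F.
  have -> : has (fun p1 => upair_eq p1 (b, a)) X by move: Fab; rewrite /F; under eq_has do rewrite upair_swapr.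
  by rewrite mem_cat (@cands_complete t A B out W HW Hout _ _ _ _ bv au ao) orbT.
case/hasP=> q /mapP[c]; rewrite mem_filter => /andP[sc cC] -> epq.
have : c.2 = (F A c.1, F B c.1).
  by move: cC; rewrite mem_cat => /orP[] /(@cands_sound t A B out W HW Hout _ _ _).
move=> c2; move: sc; rewrite c2 Hsel => /hasP[p0 p0X e0].
apply/hasP; exists p0 => //.
by rewrite upair_sym (upair_trans _ _ _ e0) // upair_sym.
Qed.

Lemma Dec_correct u v :
  all (Defs.transversal t) A -> all (Defs.transversal t) B ->
  Dec (lab t A B out W u) (lab t A B out W v) = model_adj A B u v.
Proof.
move=> HA HB; rewrite /Dec !parse_lab; symmetry.
apply: model_adj_ext => p ple.
  apply: (key (fun b : bool * bool => b.1)) => //.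
  by move=> x xA; rewrite mem_cat xA.
apply: (key (fun b : bool * bool => b.2)) => //.
by move=> x xB; rewrite mem_cat xB orbT.
Qed.

End Correct.

Lemma lab_size t A B out W u d h :
  (forall a, size (out a) <= d) -> size u < h ->
  size (lab t A B out W u) <=
    2 * (h + (2 * (h * W) + 2 * h) + h * (2 * (d * (W + 2)) + 2 * d)) + 2 * (h + 2).
Proof.
move=> od uh.
have s1 : size (idsL t W u) = (size u).+1 by rewrite size_map size_iota.
have s2 : size (outsL t A B out W u) = (size u).+1 by rewrite size_map size_iota.
have e1 : sumn (map size (idsL t W u)) <= size (idsL t W u) * W.
  by apply: sumn_le => w /mapP[i _ ->]; rewrite size_enc.
have e2 : sumn (map size (map code (outsL t A B out W u))) <=
          size (outsL t A B out W u) * (2 * (d * (W + 2)) + 2 * d).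
  rewrite -map_comp; apply: sumn_le => o /mapP[i _ ->] /=.
  rewrite size_code size_map -!mul2n.
  have : sumn (map size [seq entry t A B W (take i u) b | b <- out (take i u)])
      <= size [seq entry t A B W (take i u) b | b <- out (take i u)] * (W + 2).
    apply: sumn_le => w /mapP[b _ ->]; rewrite /entry /= size_enc; lia.
  rewrite size_map; have := od (take i u); nia.
rewrite /lab; move: e1 e2 s1 s2; move: (idsL t W u) (outsL t A B out W u) => I O e1 e2 s1 s2.
rewrite size_code /= size_code size_map -!mul2n.
move: e1 e2; rewrite s1 s2; nia.
Qed.

Section RB.
Local Open Scope R_scope.
Lemma INR_expn2 k : INR (2 ^ k)%N = 2 ^ k.
Proof.
elim: k => [|k IH]; first by rewrite expn0.
by rewrite expnS mult_INR IH /=.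
Qed.

Lemma real_bound (s d h k n : nat) : (s <= 96 * d * h * k)%N -> (2 ^ k <= n)%N -> (0 < n)%N ->
  Rle (INR s) (Rmult (Rmult (Rmult (IZR 96%Z) (INR d)) (INR h)) (Rdiv (ln (INR n)) (ln 2))).
Proof.
move=> /leP hs /leP hk /leP hn.
have ln2 : 0 < ln 2.
  rewrite -ln_1; apply: ln_increasing; lra.
have Hk : INR k <= ln (INR n) / ln 2.
  apply: (Rmult_le_reg_r (ln 2)) => //.
  rewrite /Rdiv Rmult_assoc Rinv_l; last by apply: Rgt_not_eq.
  rewrite Rmult_1_r -ln_pow; last lra.
  have h2 : 2 ^ k <= INR n.
    have := le_INR _ _ hk; rewrite INR_expn2; lra.
  have h0 : 0 < 2 ^ k by apply: pow_lt; lra.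
  case: (Rle_lt_or_eq_dec _ _ h2) => [lt|->]; last by apply: Rle_refl.
  by apply: Rlt_le; apply: ln_increasing.
apply: Rle_trans (le_INR _ _ hs) _.
rewrite !mult_INR.
have -> : INR 96 = IZR 96%Z by rewrite INR_IZR_INZ.
apply: Rmult_le_compat_l => //.
apply: Rmult_le_pos; [apply: Rmult_le_pos; [lra|apply: pos_INR]|apply: pos_INR].
Qed.
End RB.

Theorem proposition4p1 :
  exists C : R, Rlt 0 C /\
  forall d h : nat, 1 <= d -> 1 <= h ->
  exists D : seq bool -> seq bool -> bool,
  forall (V : finType) (adj : rel V),
    (forall x y, adj x y = adj y x) -> (forall x, ~~ adj x x) ->
    2 <= #|V| ->
    has_stm adj d h ->
    exists l : V -> seq bool,
      (forall x, Rle (INR (size (l x)))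
                     (Rmult (Rmult (Rmult C (INR d)) (INR h))
                            (Rdiv (ln (INR #|V|)) (ln 2)))) /\
      (forall x y, x != y -> D (l x) (l y) = adj x y).
Proof.
exists (IZR 96%Z); split; first by apply: IZR_lt.
move=> d h d1 h1; exists Dec => V adj _ _ n2.
case=> t [A [B [f [[Hstm Hw] Hd [finj fl] fsur Hadj]]]].
case: Hstm => HA HB _ _.
have n0 : 0 < #|V| by apply: leq_trans n2.
have hk1 := trunc_logP (isT : 1 < 2) n0.
have hk2 := trunc_log_ltn #|V| (isT : 1 < 2).
set k := trunc_log 2 #|V| in hk1 hk2 *.
have k1 : 0 < k.
  rewrite lt0n; apply/negP => /eqP k0; move: hk2; rewrite k0 expn1 => hh.
  by move: (leq_trans n2 hh).
have Hleaves : size (leaves t) <= #|V|.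
  rewrite cardT -(size_map f); apply: uniq_leq_size; first exact: leaves_uniq.
  by move=> u /fsur[x <-]; apply: map_f; rewrite mem_enum.
have HW : size (nodes t) < 2 ^ k.+2.
  have := size_nodes_lt t; rewrite expnS -mul2n.
  move: Hleaves hk2; unfold node in *; lia.
have [out [o1 o2 o3]] := @orient t A B d Hw (undup (nodes t)) (undup_uniq _)
  (introT allP (fun x hx => (etrans (esym (mem_undup (nodes t) x)) hx))).
have Hout : forall a, {subset out a <= nodes t}.
  by move=> a x hx; rewrite -mem_undup; apply: o2 hx.
have Hor : forall a b, a \in nodes t -> b \in nodes t -> ab_edge A B a b ->
    b \in out a \/ a \in out b.
  by move=> a b an bn; apply: o3; rewrite mem_undup.
exists (fun x => lab t A B out k.+2 (f x)); split.
  move=> x; apply: (@real_bound _ d h k) => //.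
  have hu : size (f x) < h by apply: leq_trans (size_leaf _ _ (fl x)) Hd.
  apply: leq_trans (@lab_size t A B out k.+2 (f x) d h o1 hu) _.
  have q1 : h * k <= d * h * k by rewrite -mulnA leq_pmull.
  have q2 : d * h <= d * h * k by rewrite leq_pmulr.
  have q3 : h <= d * h by rewrite leq_pmull.
  have q4 : 0 < d * h by rewrite muln_gt0 d1 h1.
  nia.
move=> x y xy.
by rewrite (@Dec_correct t A B out k.+2 HW Hout Hor (f x) (f y) HA HB) Hadj.
Qed.
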